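(* Let $\varphi:\mathcal K\to[0,\infty)$ be a completely alternating, upper semicontinuous set-function with $\varphi(\emptyset)=0$, and let $\nu_\varphi$ be a locally finite measure on $\mathcal F'$ such that $\nu_\varphi(\mathcal F_K)=\varphi(K)$ for all $K\in\mathcal K$. Then for every $f\in\mathrm{USC}$, $$\int f\,d\varphi=\int_{\mathcal F'} f^\vee\,d\nu_\varphi\qquad\text{and}\qquad \int^e f\,d\varphi=\int^e f^\vee\,d\nu_\varphi ,$$ where on the right the first integral is the Lebesgue integral and the second is $\int^e g\,d\nu_\varphi:=\sup_{t>0} t\,\nu_\varphi(\{F\in\mathcal F':\ g(F)\ge t\})$.
   Context: $E$ is a locally compact Hausdorff second countable space; $\mathcal K$ and $\mathcal F$ denote the families of compact and closed subsets of $E$, $\mathcal F'=\mathcal F\setminus\{\emptyset\}$, and for $K\in\mathcal K$, $\mathcal F_K=\{F\in\mathcal F:\ F\cap K\neq\emptyset\}$; $\mathcal F'$ carries the $\sigma$-algebra generated by the sets $\mathcal F_K$, $K\in\mathcal K$. A measure $\nu$ on $\mathcal F'$ is locally finite if $\nu(\mathcal F_K)<\infty$ for all $K\in\mathcal K$. $\varphi:\mathcal K\to[0,\infty)$ is completely alternating if the recursively defined differences $\Delta_{K_1}\varphi(K)=\varphi(K)-\varphi(K\cup K_1)$, $\Delta_{K_n}\cdots\Delta_{K_1}\varphi(K)=\Delta_{K_{n-1}}\cdots\Delta_{K_1}\varphi(K)-\Delta_{K_{n-1}}\cdots\Delta_{K_1}\varphi(K\cup K_n)$ are $\le 0$ for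 all $n\ge1$ and $K,K_1,\dots,K_n\in\mathcal K$; it is upper semicontinuous if $\varphi(K_n)\downarrow\varphi(K)$ whenever $K_n\downarrow K$ in $\mathcal K$. $\mathrm{USC}$ is the family of bounded non-negative upper semicontinuous functions on $E$ with relatively compact support $\{f\neq0\}$ (so $\{f\ge t\}\in\mathcal K$ for $t>0$). For $f\in\mathrm{USC}$: Choquet integral $\int f\,d\varphi=\int_0^\infty\varphi(\{f\ge t\})\,dt$; extremal integral $\int^e f\,d\varphi=\sup\{\varphi(K)\inf_{x\in K}f(x):\ K\in\mathcal K\}$. For a closed set $F$, $f^\vee(F)=\sup_{x\in F}f(x)$. *)

(* Defs.v *)
From HB Require Import structures.
From mathcomp Require Import all_boot all_order all_algebra.
From mathcomp Require Import all_classical all_reals all_analysis.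
Set Implicit Arguments. Unset Strict Implicit. Unset Printing Implicit Defensive.
Import Order.TTheory GRing.Theory Num.Theory.
Import numFieldNormedType.Exports.
Local Open Scope classical_set_scope.
Local Open Scope ring_scope.

Definition closedF (E : topologicalType) :=
  {F : set E | closed F /\ F !=set0}.

Section ClosedFInstances.
Variable E : ptopologicalType.
HB.instance Definition _ := gen_eqMixin (closedF E).
HB.instance Definition _ := gen_choiceMixin (closedF E).
Lemma setT_closedF : closed [set: E] /\ [set: E] !=set0.
Proof. by split; [exact: closedT | exists point]. Qed.
HB.instance Definition _ :=
  isPointed.Build (closedF E) (exist _ [set: E] setT_closedF).
End ClosedFInstances.

Definition hitting (E : topologicalType) (K : set E) : set (closedF E) :=
  [set F | (proj1_sig F) `&` K !=set0].

Definition hitting_family (E : topologicalType) : set (set (closedF E)) :=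
  [set hitting K | K in [set K : set E | compact K]].

Definition FSpace (E : ptopologicalType) :=
  g_sigma_algebraType (@hitting_family E).

(* iterated differences Delta_{K_n} ... Delta_{K_1} phi (K),
   with the list written [:: K_n; ...; K_1] *)
Fixpoint Delta (E : Type) (R : realType) (phi : set E -> R)
    (s : seq (set E)) (K : set E) : R :=
  match s with
  | [::] => phi K
  | Kn :: s' => Delta phi s' K - Delta phi s' (K `|` Kn)
  end.

Definition completely_alternating (E : topologicalType) (R : realType)
    (phi : set E -> R) :=
  forall (s : seq (set E)) (K : set E), s <> [::] ->
    (forall A, A \in s -> compact A) -> compact K -> Delta phi s K <= 0.

Definition usc_setfun (E : topologicalType) (R : realType) (phi : set E -> R) :=
  forall (Kn : nat -> set E) (K : set E),
    (forall n, compact (Kn n)) -> (forall n, Kn n.+1 `<=` Kn n) ->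
    \bigcap_n Kn n = K ->
    (forall n, phi (Kn n.+1) <= phi (Kn n)) /\ phi (Kn n) @[n --> \oo] --> phi K.

Definition upper_semicontinuous (E : topologicalType) (R : realType)
    (f : E -> R) :=
  forall x a, f x < a -> \forall y \near x, f y < a.

Definition USC (E : topologicalType) (R : realType) (f : E -> R) :=
  [/\ exists M : R, forall x, `|f x| <= M,
      forall x, 0 <= f x,
      upper_semicontinuous f &
      compact (closure [set x | f x != 0])].

Definition choquet_integral (E : topologicalType) (R : realType)
    (phi : set E -> R) (f : E -> R) : \bar R :=
  (\int[@lebesgue_measure R]_(t in `]0%R, +oo[%classic)
     (phi [set x | t <= f x])%:E)%E.

Definition extremal_integral (E : topologicalType) (R : realType)
    (phi : set E -> R) (f : E -> R) : \bar R :=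
  ereal_sup [set (phi K * inf (f @` K))%:E | K in [set K : set E | compact K]].

Definition fvee (E : topologicalType) (R : realType) (f : E -> R)
    (F : closedF E) : R := sup (f @` proj1_sig F).

Definition extremal_integral_measure (d : measure_display) (T : measurableType d)
    (R : realType) (nu : set T -> \bar R) (g : T -> R) : \bar R :=
  ereal_sup [set (t%:E * nu [set F | (t <= g F)%R])%E | t in `]0%R, +oo[%classic].

(* Main.v *)
Require Import Defs.
From HB Require Import structures.
From mathcomp Require Import all_boot all_order all_algebra.
From mathcomp Require Import all_classical all_reals all_analysis.
From mathcomp Require Import measurable_realfun.
Import Order.TTheory GRing.Theory Num.Theory.
Local Open Scope classical_set_scope.
Local Open Scope ring_scope.

Section Topo.
Variables (R : realType) (E : ptopologicalType) (f : E -> R).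
Hypothesis hf : USC f.

Lemma usc_open (s : R) : open [set y | f y < s].
Proof.
case: hf => _ _ husc _.
rewrite openE => x /= fx; exact: husc x s fx.
Qed.

Lemma level_closed (t : R) : closed [set x | t <= f x].
Proof.
rewrite (_ : [set x | t <= f x] = ~` [set y | f y < t]).
  by rewrite closedC; exact: usc_open.
apply/seteqP; split => x /=.
  by rewrite ltNge => tx /negP; rewrite tx.
by rewrite ltNge => /negP; rewrite negbK.
Qed.

Lemma level_compact (t : R) : 0 < t -> compact [set x | t <= f x].
Proof.
move=> t0; case: hf => _ _ _ hc.
apply: (subclosed_compact (level_closed t) hc) => x /= tx.
apply: subset_closure => /=; by rewrite gt_eqF // (lt_le_trans t0).
Qed.

Lemma f_bounded : exists M : R, forall x, f x <= M.
Proof. by case: hf => -[M hM] _ _ _; exists M => x; exact: le_trans (ler_norm _) (hM x). Qed.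

Lemma has_sup_img (F : set E) : F !=set0 -> has_sup (f @` F).
Proof.
move=> [x Fx]; split; first by exists (f x); exists x.
by have [M hM] := f_bounded; exists M => _ [y _ <-].
Qed.

Lemma fvee_ge0 (F : closedF E) : 0 <= fvee f F.
Proof.
case: F => F [cF [x Fx]]; rewrite /fvee /=.
case: hf => _ h0 _ _.
apply: le_trans (h0 x) _.
have hub := sup_upper_bound (has_sup_img F (ex_intro F x Fx)); apply: hub; by exists x.
Qed.

Lemma fin_below (t : R) (s : seq R) (u : R) : u < t -> (forall i, i \in s -> i < t) ->
  exists2 s0, s0 < t & (u <= s0 /\ forall i, i \in s -> i <= s0).
Proof.
elim: s => [|a s IH] ut hs; first by exists u.
have [s0 s0t [us0 hs0]] := IH ut (fun i hi => hs i (mem_behead (s := a :: s) hi)).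
have at_ : a < t by apply: hs; rewrite mem_head.
exists (Num.max a s0); first by rewrite gt_max at_ s0t.
split; first by rewrite le_max us0 orbT.
move=> i; rewrite inE => /orP[/eqP ->|/hs0 h]; first by rewrite le_max lexx.
by rewrite le_max h orbT.
Qed.

Lemma fvee_hitting (F : closedF E) (t : R) : 0 < t ->
  (t <= fvee f F) <-> hitting [set x | t <= f x] F.
Proof.
move=> t0; case: F => F [cF F0]; rewrite /fvee /hitting /=; split; last first.
  case=> x [Fx tx]; apply: le_trans tx _.
  have hub := sup_upper_bound (has_sup_img F (ex_intro F x Fx)); apply: hub; by exists x.
move=> tsup; apply/not_existsP => hno.
have hK : compact ([set x | t / 2 <= f x] `&` F).
  by apply: compact_closedI => //; apply: level_compact; rewrite divr_gt0.
have hlt : forall x, F x -> f x < t.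
  by move=> x Fx; rewrite ltNge; apply/negP => hx; apply: (hno x).
move: hK; rewrite compact_cover => /(_ R [set s | s < t] (fun s => [set y | f y < s])).
case.
- by move=> i _; exact: usc_open.
- move=> x [_ Fx]; exists ((f x + t) / 2) => /=.
    by rewrite ltr_pdivrMr // mulr2n mulrDr mulr1 ltrD2r hlt.
  by rewrite ltr_pdivlMr // mulrDr mulr1 ltrD2l hlt.
move=> D' hD' hcov.
have t2 : t / 2 < t by rewrite ltr_pdivrMr // ltr_pMr // ltr1n.
have [s0 s0t [ts0 hs0]] := @fin_below t (finmap.enum_fset D') (t / 2) t2 (fun i hi => set_mem (hD' i hi)).
have : sup (f @` F) <= s0.
  apply: ge_sup; first by case: F0 => x Fx; exists (f x); exists x.
  move=> _ [y Fy <-].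
  have [hy|hy] := leP (t / 2) (f y).
    have [i Di /= fyi] := hcov y (conj hy Fy).
    by apply: ltW; apply: lt_le_trans fyi (hs0 i Di).
  exact: ltW (lt_le_trans hy ts0).
by move=> h; have := le_lt_trans (le_trans tsup h) s0t; rewrite ltxx.
Qed.

Lemma fvee_measurable : measurable_fun [set: FSpace E] (fvee f : FSpace E -> R).
Proof.
apply: (measurability (@RGenCInfty.G R)); first exact: RGenCInfty.measurableE.
move=> /= _ [_ [r ->] <-].
have [r0|r0] := leP r 0.
  rewrite (_ : _ `&` _ = setT); first exact: measurableT.
  apply/seteqP; split => // F _; split => //=.
  by rewrite in_itv /= andbT (le_trans r0 (fvee_ge0 F)).
rewrite (_ : _ `&` _ = hitting [set x | r <= f x]).
  apply: sub_sigma_algebra; exists [set x | r <= f x] => //.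
  exact: level_compact.
apply/seteqP; split => F /=.
  by rewrite in_itv /= andbT => -[_ /(fvee_hitting F r r0)].
by move=> /(fvee_hitting F r r0) h; split => //=; rewrite in_itv /= andbT.
Qed.
End Topo.
Section LC.
Local Open Scope ereal_scope.
Context d (T : measurableType d) (R : realType).
Variables (mu : {measure set T -> \bar R}) (S : set T) (mS : measurable S).
Hypothesis hS : mu S < +oo.
Variables (g : T -> R).
Hypothesis mg : measurable_fun setT g.
Hypothesis g0 : forall x, (0 <= g x)%R.
Hypothesis gS : forall x, (0 < g x)%R -> S x.

Let nuS : {finite_measure set T -> \bar R} := mfrestr mS hS.

Let gout x : ~ S x -> g x = 0%R.
Proof.
move=> nS; apply/le_anti; rewrite g0 andbT leNgt; apply/negP => /gS; exact: nS.
Qed.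

Let step1 (m : {measure set T -> \bar R}) :
  \int[m]_x (g x)%:E = \int[m]_(x in S) (g x)%:E.
Proof.
rewrite [RHS]integral_mkcond; apply: eq_integral => x _; rewrite patchE.
case: ifP => // /negbT xS; rewrite gout //; by move=> Sx; move: xS; rewrite mem_set.
Qed.

Let A := [set p : T * R | (0 < p.2)%R /\ (p.2 <= g p.1)%R].

Let mA : measurable A.
Proof.
pose f1 (p : T * R) := (0 < p.2)%R.
pose f2 (p : T * R) := (p.2 <= g p.1)%R.
rewrite (_ : A = f1 @^-1` [set true] `&` f2 @^-1` [set true]); last first.
  apply/seteqP; split => p; rewrite /A /f1 /f2 /=.
    by case=> h1 h2; split; rewrite /= ?h1 ?h2.
  by case=> /= h1 h2.
apply: measurableI.
- have : measurable_fun setT f1.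
    by apply: measurable_fun_ltr => //; exact: measurable_snd.
  by move=> /(_ measurableT [set true]); rewrite setTI; exact.
- have : measurable_fun setT f2.
    apply: measurable_fun_ler; first exact: measurable_snd.
    exact: measurableT_comp mg measurable_fst.
  by move=> /(_ measurableT [set true]); rewrite setTI; exact.
Qed.

Lemma layer_cake :
  \int[mu]_x (g x)%:E = \int[lebesgue_measure]_(t in `]0%R, +oo[%classic) mu [set x | (t <= g x)%R].
Proof.
rewrite step1 (eq_measure_integral nuS); last first.
  by move=> B mB BS; rewrite /nuS /= /mfrestr /mrestr setIidl.
rewrite -step1.
transitivity (\int[nuS]_x \int[lebesgue_measure]_t (\1_A (x, t))%:E).
  apply: eq_integral => x _.
  have hind : forall t, \1_A (x, t) = \1_(`]0%R, g x]%classic) t :> R.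
    move=> t; rewrite !indicE; congr (_%:R).
    congr (nat_of_bool _); apply/idP/idP => /set_mem; rewrite /A /= => h; apply/mem_set => //=.
      by rewrite in_itv /=; apply/andP.
    by move: h; rewrite in_itv /= => /andP.
  under eq_integral => t _ do rewrite hind.
  rewrite integral_indic // setIT.
  transitivity (lebesgue_measure (`]0%R, g x]%classic : set R)); last by [].
  rewrite lebesgue_measure_itv /= lte_fin.
  have [gx|gx] := ltP 0%R (g x); first by rewrite EFinN sube0.
  by have -> : g x = 0%R by apply/le_anti; rewrite gx g0.
rewrite (@fubini_tonelli _ _ _ _ _ nuS lebesgue_measure (fun p => (\1_A p)%:E)); last 2 first.
- exact/measurable_EFinP/measurable_indic.
- by move=> p; rewrite lee_fin.
rewrite [RHS]integral_mkcond; apply: eq_integral => t _.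
have [t0|t0] := ltP 0%R t.
  have hind2 : forall x, \1_A (x, t) = \1_([set x | (t <= g x)%R]) x :> R.
    move=> x; rewrite !indicE; congr (_%:R); congr (nat_of_bool _).
    apply/idP/idP => /set_mem; rewrite /A /= => h; apply/mem_set => //=.
      by case: h.
  have mG : measurable [set x | (t <= g x)%R].
    rewrite (_ : [set x | _] = setT `&` g @^-1` `[t, +oo[%classic).
      exact: mg.
    apply/seteqP; split=> x /=; rewrite in_itv /= andbT //.
    by case.
  under eq_integral => x _ do rewrite hind2.
  rewrite integral_indic // patchE ifT; last by apply/mem_set; rewrite /= in_itv /= t0.
  rewrite setIT /nuS /= /mfrestr /mrestr setIidl // => x /= h; apply: gS.
  exact: lt_le_trans h.
rewrite patchE ifF; last by apply/negbTE/negP => /set_mem; rewrite /= in_itv /= ltNge t0.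
apply: integral0_eq => x _; rewrite indicE memNset //= => -[h _].
by move: t0; rewrite leNgt h.
Qed.
End LC.
Section Main.
Variables (R : realType) (E : ptopologicalType) (phi : set E -> R).
Hypothesis phi_ge0 : forall K : set E, compact K -> 0 <= phi K.
Hypothesis phi_ca : completely_alternating phi.
Hypothesis phi0 : phi set0 = 0.
Variable nu : {measure set (FSpace E) -> \bar R}.
Hypothesis nu_lf : forall K : set E, compact K -> (nu (hitting K) < +oo)%E.
Hypothesis nu_phi : forall K : set E, compact K -> nu (hitting K) = (phi K)%:E.
Variable f : E -> R.
Hypothesis hf : USC f.

Lemma phi_mono (K C : set E) : compact K -> compact C -> K `<=` C -> phi K <= phi C.
Proof.
move=> cK cC KC.
have := @phi_ca [:: C] K ltac:(discriminate) _ cK.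
rewrite /= setUidr // subr_le0; apply => A; rewrite inE => /eqP ->; exact: cC.
Qed.

Lemma level_hit (t : R) : 0 < t ->
  [set F : FSpace E | t <= fvee f F] = hitting [set x | t <= f x].
Proof.
move=> t0; apply/seteqP; split => F /=; by move/(@fvee_hitting R E f hf F t t0).
Qed.

Lemma part2 : extremal_integral phi f = extremal_integral_measure nu (fvee f).
Proof.
have hB0 : (0 <= extremal_integral_measure nu (fvee f))%E.
  apply: le_ereal_sup_tmp; exists ((1:R)%:E * nu [set F | (1 <= fvee f F)%R])%E.
    by exists 1 => //=; rewrite in_itv /= andbT.
  by apply: mule_ge0 => //; rewrite lee_fin.
move: hB0; rewrite /extremal_integral /extremal_integral_measure => hB0.
apply/le_anti/andP; split.
- apply: ge_ereal_sup => _ [K cK <-].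
  have [[x Kx]|K0] := pselect (K !=set0); last first.
    have -> : K = set0 by apply/seteqP; split => y // Ky; apply: K0; exists y.
    by rewrite image_set0 inf0 mulr0.
  case: hf => _ h0 _ _.
  have hlb : lbound (f @` K) 0 by move=> _ [y _ <-].
  have s0 : 0 <= inf (f @` K) by apply: lb_le_inf => //; exists (f x); exists x.
  have [sle|s0'] := leP (inf (f @` K)) 0.
    have -> : inf (f @` K) = 0 by apply/le_anti; rewrite sle s0.
    by rewrite mulr0.
  clear s0; rename s0' into s0.
  set s := inf (f @` K) in s0 *.
  have KC : K `<=` [set y | s <= f y].
    move=> y Ky /=; apply: (ge_inf (ex_intro _ 0 hlb)); by exists y.
  apply: le_ereal_sup_tmp; exists (s%:E * nu [set F | (s <= fvee f F)%R])%E.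
    by exists s => //=; rewrite in_itv /= andbT.
  rewrite level_hit // (nu_phi _ (@level_compact R E f hf _ s0)).
  rewrite -EFinM lee_fin mulrC ler_wpM2l //; first exact: ltW.
  apply: phi_mono => //; exact: (@level_compact R E f hf _).
- apply: ge_ereal_sup => yy [t t0 <-]; move: t0; rewrite /= in_itv /= andbT => t0.
  rewrite level_hit // (nu_phi _ (@level_compact R E f hf _ t0)).
  set C := [set x | t <= f x].
  have [[x Cx]|C0] := pselect (C !=set0); last first.
    have -> : C = set0 by apply/seteqP; split => y // Ky; apply: C0; exists y.
    rewrite phi0 mule0.
    apply: le_ereal_sup_tmp; exists ((phi set0 * inf (f @` set0))%:E).
      by exists set0 => //; exact: compact0.
    by rewrite phi0 mul0r.
  apply: le_ereal_sup_tmp; exists ((phi C * inf (f @` C))%:E).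
    by exists C => //; exact: (@level_compact R E f hf _).
  rewrite -EFinM lee_fin mulrC ler_wpM2l //; first exact/phi_ge0/(@level_compact R E f hf _).
  by apply: lb_le_inf; [exists (f x); exists x | move=> _ [y Cy <-]].
Qed.

Lemma part1 : choquet_integral phi f = (\int[nu]_F (fvee f F)%:E)%E.
Proof.
case: hf => _ h0 _ hc.
set S := hitting (closure [set x | f x != 0]).
have mS : measurable (S : set (FSpace E)).
  by apply: sub_sigma_algebra; exists (closure [set x | f x != 0]).
have hS : (nu S < +oo)%E by exact: nu_lf.
have gS : forall F : FSpace E, (0 < fvee f F)%R -> S F.
  move=> F hF.
  have [x [Fx hx]] := (@fvee_hitting R E f hf F (fvee f F) hF).1 (lexx _).
  exists x; split => //; apply: subset_closure => /=.
  by rewrite gt_eqF // (lt_le_trans hF hx).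
rewrite (@layer_cake _ _ R nu S mS hS (fvee f) (@fvee_measurable R E f hf)
  (@fvee_ge0 R E f hf) gS).
rewrite /choquet_integral; apply: eq_integral => t.
rewrite inE /= in_itv /= andbT => t0.
by rewrite level_hit // (nu_phi _ (@level_compact R E f hf _ t0)).
Qed.
End Main.

Theorem mainTheorem1 (R : realType) (E : ptopologicalType)
  (hE : hausdorff_space E) (lcE : locally_compact [set: E])
  (scE : @second_countable E)
  (phi : set E -> R)
  (phi_ge0 : forall K : set E, compact K -> 0 <= phi K)
  (phi_ca : completely_alternating phi)
  (phi_usc : usc_setfun phi)
  (phi0 : phi set0 = 0)
  (nu : {measure set (FSpace E) -> \bar R})
  (nu_lf : forall K : set E, compact K -> (nu (hitting K) < +oo)%E)
  (nu_phi : forall K : set E, compact K -> nu (hitting K) = (phi K)%:E)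
  (f : E -> R) (hf : USC f) :
  choquet_integral phi f = (\int[nu]_F (fvee f F)%:E)%E /\
  extremal_integral phi f = extremal_integral_measure nu (fvee f).
Proof.
split.
- exact: (@part1 R E phi nu nu_lf nu_phi f hf).
- exact: (@part2 R E phi phi_ge0 phi_ca phi0 nu nu_phi f hf).
Qed.
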